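(* Let $f\colon\prod_{i\in[n]}X_i\to Y$ satisfy condition (BC), let $\varphi_k\colon X_k\to Y$ ($k\in[n]$) be maps satisfying the boundary condition, and let $p\colon Y^n\to Y$ be a polynomial function. Put $a_k=\varphi_k(0_{X_k})$, $b_k=\varphi_k(1_{X_k})$, and define the polynomial functions $$p^-(\mathbf{y})=\bigvee_{I\subseteq[n]}\Big(c_I^-\wedge\bigwedge_{i\in I}y_i\Big),\quad c_I^-=\operatorname{cl}\Big(f(\widehat{\mathbf{1}}_I)\wedge\bigwedge_{i\notin I}\overline{a_i}\Big),$$ $$p^+(\mathbf{y})=\bigvee_{I\subseteq[n]}\Big(c_I^+\wedge\bigwedge_{i\in I}y_i\Big),\quad c_I^+=\operatorname{int}\Big(f(\widehat{\mathbf{1}}_I)\vee\bigvee_{i\in I}\overline{b_i}\Big).$$ Then $f(\mathbf{x})=p(\varphi_1(x_1),\ldots,\varphi_n(x_n))$ for all $\mathbf{x}\in\prod_{i\in[n]}X_i$ if and only if $\Phi_k^-\le\varphi_k\le\Phi_k^+$ for each $k\in[n]$ and $p^-\le p\le p^+$ (pointwise on $Y^n$).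
   Context: $Y$ is a finite distributive lattice identified with a sublattice of $\mathcal{P}(U)$ for a finite set $U$, with least element $0=\emptyset$, greatest element $1=U$, and $\wedge,\vee$ being intersection and union; $\overline{S}=U\setminus S$. For $S\subseteq U$, $\operatorname{cl}(S)=\bigwedge\{y\in Y: y\ge S\}$, $\operatorname{int}(S)=\bigvee\{y\in Y: y\le S\}$. Empty meets equal $U$ and empty joins equal $\emptyset$. $[n]=\{1,\ldots,n\}$; $X_1,\ldots,X_n$ are arbitrary sets with at least two elements, each with two fixed distinct elements $0_{X_k},1_{X_k}$ (written $0,1$). For $\mathbf{x}\in\prod_i X_i$ and $a\in X_k$, $\mathbf{x}_k^a$ is $\mathbf{x}$ with $k$-th component replaced by $a$. For $I\subseteq[n]$, $\widehat{\mathbf{1}}_I$ is the tuple whose $i$-th component is $1_{X_i}$ if $i\in I$ and $0_{X_i}$ otherwise. A map $\varphi_k\colon X_k\to Y$ satisfies the boundary condition if $\varphi_k(0_{X_k})\le\varphi_k(x_k)\le\varphi_k(1_{X_k})$ for all $x_k$. A polynomial function $Y^n\to Y$ is a composition of $\wedge,\vee$ with variables and constants. Condition (BC): $f(\mathbf{x}_k^0)\le f(\mathbf{x})\le f(\mathbf{x}_k^1)$ for all $k$ and $\mathbf{x}$. For $k\in[n]$, $a_k\in X_k$: $$\Phi_k^-(a_k)=\bigvee_{\mathbf{x}:\,x_k=a_k}\operatorname{cl}\big(f(\mathbf{x})\wedge\overline{f(\mathbf{x}_k^0)}\big),\qquad \Phi_k^+(a_k)=\bigwedge_{\mathbf{x}:\,x_k=a_k}\operatorname{int}\big(f(\mathbf{x})\vee\overline{f(\mathbf{x}_k^1)}\big),$$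 ranging over all $\mathbf{x}$ with $k$-th component $a_k$. *)

(* Defs.v *)
From mathcomp Require Import all_boot.
From Stdlib Require Import ClassicalEpsilon.
Set Implicit Arguments.
Unset Strict Implicit.
Unset Printing Implicit Defensive.

(* Classical boolean reflection of a proposition (used to form joins/meets of
   possibly infinite families of subsets of the finite set U). *)
Definition asbool (P : Prop) : bool :=
  if excluded_middle_informative P then true else false.

Section Lat.
Variable U : finType.

Definition is_bounded_sublattice (Y : {set {set U}}) : Prop :=
  [/\ set0 \in Y, setT \in Y,
      (forall a b, a \in Y -> b \in Y -> a :&: b \in Y) &
      (forall a b, a \in Y -> b \in Y -> a :|: b \in Y)].

(* closure and interior w.r.t. Y (empty meet = U, empty join = set0) *)
Definition cl (Y : {set {set U}}) (S : {set U}) : {set U} :=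
  \bigcap_(y in Y | S \subset y) y.
Definition int (Y : {set {set U}}) (S : {set U}) : {set U} :=
  \bigcup_(y in Y | y \subset S) y.

Definition bigJoin (A : Type) (P : A -> Prop) (F : A -> {set U}) : {set U} :=
  [set u | asbool (exists a, P a /\ u \in F a)].
Definition bigMeet (A : Type) (P : A -> Prop) (F : A -> {set U}) : {set U} :=
  [set u | asbool (forall a, P a -> u \in F a)].
End Lat.

Inductive lterm (U : finType) (n : nat) : Type :=
| LVar of 'I_n
| LConst of {set U}
| LMeet of lterm U n & lterm U n
| LJoin of lterm U n & lterm U n.

Fixpoint leval (U : finType) (n : nat) (t : lterm U n) (y : 'I_n -> {set U})
  : {set U} :=
  match t with
  | LVar i => y i
  | LConst c => c
  | LMeet t1 t2 => leval t1 y :&: leval t2 y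
  | LJoin t1 t2 => leval t1 y :|: leval t2 y
  end.

Fixpoint lconsts_in (U : finType) (n : nat) (Y : {set {set U}}) (t : lterm U n)
  : Prop :=
  match t with
  | LVar _ => True
  | LConst c => c \in Y
  | LMeet t1 t2 | LJoin t1 t2 => lconsts_in Y t1 /\ lconsts_in Y t2
  end.

Definition polynomial_function (U : finType) (n : nat) (Y : {set {set U}})
  (p : ('I_n -> {set U}) -> {set U}) : Prop :=
  exists t : lterm U n, lconsts_in Y t /\
    forall y, (forall i, y i \in Y) -> p y = leval t y.

Section Pseudo.
Variables (U : finType) (Y : {set {set U}}) (n : nat) (X : 'I_n -> Type)
  (x0 x1 : forall i, X i) (f : (forall i, X i) -> {set U}).

Definition upd (x : forall i, X i) (k : 'I_n) (a : X k) : forall i, X i :=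
  dfwith x a.

Definition BC : Prop :=
  forall (k : 'I_n) (x : forall i, X i),
    f (upd x (x0 k)) \subset f x /\ f x \subset f (upd x (x1 k)).

Definition Phi_minus (k : 'I_n) (a : X k) : {set U} :=
  bigJoin (fun x : forall i, X i => x k = a)
          (fun x => cl Y (f x :&: ~: f (upd x (x0 k)))).

Definition Phi_plus (k : 'I_n) (a : X k) : {set U} :=
  bigMeet (fun x : forall i, X i => x k = a)
          (fun x => int Y (f x :|: ~: f (upd x (x1 k)))).

Definition hat1 (I : {set 'I_n}) : forall i, X i :=
  fun i => if i \in I then x1 i else x0 i.
End Pseudo.

(* Main.v *)
Require Import Defs.
From mathcomp Require Import all_boot.
From Stdlib Require Import FunctionalExtensionality ClassicalEpsilon.
Set Implicit Arguments. Unset Strict Implicit. Unset Printing Implicit Defensive.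

Lemma asboolP (P : Prop) : asbool P = true <-> P.
Proof. rewrite /asbool; case: excluded_middle_informative => h; split=> //. Qed.

Lemma in_bigJoin (U : finType) A (P : A -> Prop) (F : A -> {set U}) u :
  u \in bigJoin P F <-> exists a, P a /\ u \in F a.
Proof. rewrite /bigJoin inE; exact: asboolP. Qed.

Lemma in_bigMeet (U : finType) A (P : A -> Prop) (F : A -> {set U}) u :
  u \in bigMeet P F <-> forall a, P a -> u \in F a.
Proof. rewrite /bigMeet inE; exact: asboolP. Qed.

Lemma cl_sub (U : finType) (Y : {set {set U}}) (S : {set U}) : S \subset cl Y S.
Proof. by apply/bigcapsP => y /andP[_]. Qed.
Lemma cl_min (U : finType) (Y : {set {set U}}) (S : {set U}) y :
  y \in Y -> S \subset y -> cl Y S \subset y.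
Proof. by move=> yY Sy; apply: bigcap_inf; rewrite yY. Qed.
Lemma int_sub (U : finType) (Y : {set {set U}}) (S : {set U}) : int Y S \subset S.
Proof. by apply/bigcupsP => y /andP[_]. Qed.
Lemma int_max (U : finType) (Y : {set {set U}}) (S : {set U}) y :
  y \in Y -> y \subset S -> y \subset int Y S.
Proof. by move=> yY yS; apply: bigcup_sup; rewrite yY. Qed.

Lemma leval_A (U : finType) n (t : lterm U n) (y z : 'I_n -> {set U}) (S : {set 'I_n}) :
  (forall i, i \notin S -> y i \subset z i) ->
  leval t y \subset leval t z :|: \bigcup_(i in S) y i.
Proof.
move=> H; elim: t => [i|c|t1 IH1 t2 IH2|t1 IH1 t2 IH2] /=.
- case: (boolP (i \in S)) => iS.
  + apply/subsetP => u hu; rewrite inE; apply/orP; right.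
    by apply/bigcupP; exists i.
  + apply: subset_trans (H i iS) _; exact: subsetUl.
- exact: subsetUl.
- apply/subsetP => u /setIP[/(subsetP IH1) + /(subsetP IH2)].
  rewrite !inE => /orP[h1|w] /orP[h2|w']; by rewrite ?h1 ?h2 ?w ?w' ?orbT.
- apply/subsetP => u; rewrite inE => /orP[/(subsetP IH1)|/(subsetP IH2)];
  rewrite !inE => /orP[h|w]; by rewrite ?h ?w ?orbT.
Qed.

Lemma leval_B (U : finType) n (t : lterm U n) (y z : 'I_n -> {set U}) (S : {set 'I_n}) :
  (forall i, i \notin S -> z i \subset y i) ->
  leval t z :&: \bigcap_(i in S) y i \subset leval t y.
Proof.
move=> H; elim: t => [i|c|t1 IH1 t2 IH2|t1 IH1 t2 IH2] /=.
- case: (boolP (i \in S)) => iS.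
  + apply/subsetP => u /setIP[_ /bigcapP]; apply.  done.
  + apply: subset_trans (H i iS); exact: subsetIl.
- exact: subsetIl.
- apply/subsetP => u; rewrite !inE => /andP[/andP[h1 h2] w].
  apply/andP; split; [apply: (subsetP IH1) | apply: (subsetP IH2)];
  by rewrite inE ?h1 ?h2 w.
- apply/subsetP => u; rewrite !inE => /andP[/orP[h|h] w]; apply/orP;
  [left; apply: (subsetP IH1) | right; apply: (subsetP IH2)]; by rewrite inE h w.
Qed.

Lemma leval_in (U : finType) n (Y : {set {set U}}) (t : lterm U n) y :
  is_bounded_sublattice Y -> lconsts_in Y t -> (forall i, y i \in Y) ->
  leval t y \in Y.
Proof.
move=> [_ _ HI HU] + Hy; elim: t => [i|c|t1 IH1 t2 IH2|t1 IH1 t2 IH2] //= [h1 h2].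
  by apply: HI; [apply: IH1|apply: IH2].
by apply: HU; [apply: IH1|apply: IH2].
Qed.

Lemma dfwith_dfwith n (X : 'I_n -> Type) (w : forall i, X i) k (a b : X k) :
  dfwith (dfwith w a) b = dfwith w b.
Proof.
apply: functional_extensionality_dep => i.
case: (dfwithP (dfwith w a) b i) => [|j kj]; first by rewrite dfwith_in.
by rewrite !dfwith_out.
Qed.

Lemma dfwith_same n (X : 'I_n -> Type) (w : forall i, X i) k (a : X k) :
  w k = a -> dfwith w a = w.
Proof.
move=> wa; apply: functional_extensionality_dep => i.
by case: (dfwithP w a i) => [|j kj].
Qed.

Lemma path_lemma n (X : 'I_n -> Type) (P : (forall i, X i) -> Prop)
  (s t : forall i, X i) :
  (forall k (w : forall i, X i), w k = s k -> P w -> P (dfwith w (t k))) ->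
  P s -> P t.
Proof.
move=> step Ps.
pose mix (m : nat) : forall i, X i := fun i => if (i < m)%N then t i else s i.
have H : forall m, (m <= n)%N -> P (mix m).
  elim=> [|m IH] hm.
    suff -> : mix 0 = s by [].
    by apply: functional_extensionality_dep => i.
  pose k := Ordinal hm.
  have -> : mix m.+1 = dfwith (mix m) (t k).
    apply: functional_extensionality_dep => i.
    case: (dfwithP (mix m) (t k) i) => [|j kj]; first by rewrite /mix /= ltnSn.
    rewrite /mix ltnS leq_eqVlt.
    have -> : (nat_of_ord j == m) = false.
      by apply/negbTE; apply: contra kj => /eqP jm; apply/eqP/val_inj.
    done.
  apply: step; last by apply: IH; apply: ltnW.
  by rewrite /mix /= ltnn.
have -> : t = mix n.
  by apply: functional_extensionality_dep => i; rewrite /mix ltn_ord.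
exact: H.
Qed.
Theorem mainTheorem9 (U : finType) (Y : {set {set U}}) (n : nat)
  (X : 'I_n -> Type) (x0 x1 : forall i, X i)
  (f : (forall i, X i) -> {set U})
  (phi : forall k : 'I_n, X k -> {set U})
  (p : ('I_n -> {set U}) -> {set U}) :
  is_bounded_sublattice Y ->
  (forall i, x0 i <> x1 i) ->
  (forall x, f x \in Y) ->
  BC x0 x1 f ->
  (forall k a, phi k a \in Y) ->
  (forall k a, phi k (x0 k) \subset phi k a /\ phi k a \subset phi k (x1 k)) ->
  polynomial_function Y p ->
  let a := fun k => phi k (x0 k) in
  let b := fun k => phi k (x1 k) in
  let cminus := fun I : {set 'I_n} =>
    cl Y (f (hat1 x0 x1 I) :&: \bigcap_(i | i \notin I) ~: a i) in
  let cplus := fun I : {set 'I_n} =>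
    int Y (f (hat1 x0 x1 I) :|: \bigcup_(i in I) ~: b i) in
  let pminus := fun y : 'I_n -> {set U} =>
    \bigcup_(I : {set 'I_n}) (cminus I :&: \bigcap_(i in I) y i) in
  let pplus := fun y : 'I_n -> {set U} =>
    \bigcup_(I : {set 'I_n}) (cplus I :&: \bigcap_(i in I) y i) in
  (forall x : forall i, X i, f x = p (fun i => phi i (x i)))
  <->
  ((forall (k : 'I_n) (c : X k),
      Phi_minus Y x0 f c \subset phi k c /\ phi k c \subset Phi_plus Y x1 f c)
   /\ (forall y : 'I_n -> {set U}, (forall i, y i \in Y) ->
         pminus y \subset p y /\ p y \subset pplus y)).
Proof.
move=> HY hx01 fY hBC phiY phiB [t [tY pt]] a b cminus cplus pminus pplus.
have phixY : forall x : forall i, X i, forall i, phi i (x i) \in Y by [].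
have [Y0 YT _ _] := HY.
pose e (I : {set 'I_n}) := fun i => if i \in I then [set: U] else set0.
have eY : forall I i, e I i \in Y by move=> I i; rewrite /e; case: ifP.
have leY : forall I, leval t (e I) \in Y by move=> I; apply: leval_in.
split.
- move=> Hf.
  have fE : forall x, f x = leval t (fun i => phi i (x i)).
    by move=> x; rewrite Hf pt.
  have LA : forall (w : forall i, X i) k (z : X k),
      f w \subset f (dfwith w z) :|: phi k (w k).
    move=> w k z; rewrite !fE.
    apply: subset_trans (leval_A _ (z := fun i => phi i (dfwith w z i)) (S := [set k]) _) _.
      by move=> i; rewrite in_set1 => ik; rewrite dfwith_out // eq_sym.
    by rewrite big_set1 subxx.
  have LB : forall (w : forall i, X i) k (z : X k),
      f (dfwith w z) :&: phi k (w k) \subset f w.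
    move=> w k z; rewrite !fE.
    apply: subset_trans (leval_B _ (z := fun i => phi i (dfwith w z i)) (S := [set k]) _).
      by rewrite big_set1 subxx.
    by move=> i; rewrite in_set1 => ik; rewrite dfwith_out // eq_sym.
  split.
  + move=> k c; split.
    * apply/subsetP => u /in_bigJoin [x [xk]]; subst c.
      apply/subsetP; apply: cl_min (phiY _ _) _.
      apply/subsetP => v /setIP[/(subsetP (LA x k (x0 k)))].
      by rewrite !inE => /orP[->|].
    * apply/subsetP => u hu; apply/in_bigMeet => x xk; subst c.
      apply: (subsetP (int_max (phiY k (x k)) _)) hu.
      apply/subsetP => v hv; rewrite !inE.
      case: (boolP (v \in f (upd x (x1 k)))) => h; rewrite ?orbT //=.
      by rewrite orbF; apply: (subsetP (LB x k (x1 k))); rewrite inE h hv.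
  + move=> y yY; split.
    * apply/bigcupsP => I _.
      rewrite pt //.
      apply: (subset_trans _ (leval_B t (z := e I) (S := I) _)); last first.
        by move=> i /negbTE iI; rewrite /e iI sub0set.
        apply: setSI; apply: cl_min (leY I) _.
        apply/subsetP => u /setIP[hu /bigcapP hc].
        have hcond : forall i, i \notin ~: I ->
            phi i (hat1 x0 x1 I i) \subset e I i.
          by move=> i; rewrite inE negbK /e => ->; apply: subsetT.
        have := subsetP (leval_A t (y := fun i => phi i (hat1 x0 x1 I i)) (z := e I)
                 (S := ~: I) hcond) u.
        rewrite -fE => /(_ hu); rewrite inE => /orP[//|/bigcupP [i]].
        rewrite inE => iI; rewrite /hat1 (negbTE iI) => hi.
        by have := hc i iI; rewrite inE hi.
    * apply/subsetP => u; rewrite pt // => hu.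
      pose I := [set i | u \in y i].
      apply/bigcupP; exists I => //; rewrite inE; apply/andP; split; last first.
        by apply/bigcapP => i; rewrite inE.
      apply: (subsetP (int_max (leY I) _)).
        apply/subsetP => v hv; rewrite inE.
        case: (boolP (v \in \bigcup_(i in I) ~: b i)); rewrite ?orbT // => hb.
        rewrite orbF fE.
        have hcond : forall i, i \notin I -> e I i \subset phi i (hat1 x0 x1 I i).
          by move=> i /negbTE iI; rewrite /e iI sub0set.
        apply: (subsetP (leval_B t (z := e I) (S := I) hcond)).
        rewrite inE hv /=; apply/bigcapP => i iI.
        rewrite /hat1 iI; apply: contraR hb => hb.
        by apply/bigcupP; exists i => //; rewrite inE.
      have hcond : forall i, i \notin ~: I -> y i \subset e I i.
        by move=> i; rewrite inE negbK /e => ->; apply: subsetT.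
      have := subsetP (leval_A t (y := y) (z := e I) (S := ~: I) hcond) u hu.
      rewrite inE => /orP[//|/bigcupP [i]].
      by rewrite !inE => /negbTE ->.
- move=> [Hphi Hp] x.
  have [Hp1 Hp2] := Hp _ (phixY x).
  apply/eqP; rewrite eqEsubset; apply/andP; split.
  + apply: subset_trans Hp1.
    apply/subsetP => u hu.
    pose I := [set i | u \in phi i (x i)].
    apply/bigcupP; exists I => //; rewrite inE; apply/andP; split; last first.
      by apply/bigcapP => i; rewrite inE.
    apply: (subsetP (cl_sub _ _)); rewrite inE; apply/andP; split.
      pose P := fun w : forall i, X i => u \in f w.
      apply: (@path_lemma n X P x) => // k w wk Pw.
      rewrite /P /hat1; case: ifP => kI.
        exact: (subsetP (proj2 (hBC k w))).
      have ku : u \notin phi k (w k) by rewrite wk; move: kI; rewrite inE => ->.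
      case: (boolP (u \in f (dfwith w (x0 k)))) => // h.
      have := (subsetP (proj1 (Hphi k (w k)))) u.
      rewrite (negbTE ku); apply.
      apply/in_bigJoin; exists w; split => //.
      apply: (subsetP (cl_sub _ _)); by rewrite !inE h andbT.
    apply/bigcapP => i iI; rewrite inE; apply: contra iI => ha.
    by rewrite inE; apply: (subsetP (proj1 (phiB i (x i)))).
  + apply: subset_trans Hp2 _.
    apply/bigcupsP => I _; apply/subsetP => u /setIP[hc /bigcapP hx].
    have := subsetP (int_sub _ _) u hc; rewrite inE => /orP[hf|/bigcupP[i iI]];
      last first.
      by rewrite inE (subsetP (proj2 (phiB i (x i)))) // hx.
    pose P := fun w : forall i, X i => u \in f w.
    apply: (@path_lemma n X P (hat1 x0 x1 I)) => // k w wk Pw.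
    rewrite /P; move: wk; rewrite /hat1; case: ifP => kI wk.
      have := (subsetP (proj2 (Hphi k (x k)))) u (hx k kI).
      move/in_bigMeet => /(_ (dfwith w (x k))) /(_ (dfwith_in _ _)).
      move/(subsetP (int_sub _ _)); rewrite inE => /orP[//|].
      by rewrite /upd dfwith_dfwith dfwith_same // inE => /negP /(_ Pw).
    apply: (subsetP (proj1 (hBC k (dfwith w (x k))))).
    by rewrite /upd dfwith_dfwith dfwith_same.
Qed.
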